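(* Let $\lambda_0 \geq 0 > \lambda_1$ be real numbers and let $z_1, z_2, z_3$ be complex numbers with $z_j = a_j + b_j i$, $a_j \in \mathbb{R}$, $b_j > 0$ for $j = 1, 2, 3$. If $\lambda_0 + \lambda_1 - 2\sum_{j=1}^3 |z_j| \geq 0$, then there is an $8 \times 8$ normal centrosymmetric nonnegative matrix with eigenvalues $\lambda_0, \lambda_1, z_1, z_2, z_3, \overline{z}_1, \overline{z}_2, \overline{z}_3$.
   Context: $J$ is the $8 \times 8$ reverse identity matrix (ones on the anti-diagonal, zeros elsewhere). A matrix $Q$ is centrosymmetric if $JQJ = Q$, nonnegative if all entries are nonnegative, and normal if $QQ^* = Q^*Q$. *)

(* Defs.v *)
From HB Require Import structures.
From mathcomp Require Import all_boot all_order all_algebra.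
From mathcomp Require Import complex.
Set Implicit Arguments. Unset Strict Implicit. Unset Printing Implicit Defensive.
Import Order.TTheory GRing.Theory Num.Theory ComplexField.
Local Open Scope ring_scope.

Definition revid (R : nzRingType) (n : nat) : 'M[R]_n :=
  \matrix_(i < n, j < n) ((i + j)%N == n.-1)%:R.

Definition centrosymmetric (R : nzRingType) (n : nat) (Q : 'M[R]_n) : Prop :=
  revid R n *m Q *m revid R n = Q.

Definition nonneg_mx (R : numDomainType) (m n : nat) (Q : 'M[R]_(m, n)) : Prop :=
  forall i j, 0 <= Q i j.

(* Q is normal : Q Q^* = Q^* Q; for a real matrix Q^* = Q^T *)
Definition normal_real_mx (R : comNzRingType) (n : nat) (Q : 'M[R]_n) : Prop :=
  Q *m Q^T = Q^T *m Q.

Definition has_spectrum (R : rcfType) (n : nat) (Q : 'M[R]_n) (s : seq R[i]) : Prop :=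
  char_poly (map_mx (fun x : R => (x%:C)%C) Q) = \prod_(z <- s) ('X - z%:P).

(* Main.v *)
Require Import Defs.
From HB Require Import structures.
From mathcomp Require Import all_boot all_order all_algebra.
From mathcomp Require Import complex ring lra.
Import Order.TTheory GRing.Theory Num.Theory ComplexField.
Local Open Scope ring_scope.
Local Open Scope complex_scope.

Definition Qtb {R : rcfType} (c l0 l1 a1 b1 a2 b2 a3 b3 : R) : seq (seq R) :=
  [:: [:: c * (l0 + l1 + 2 * a1 + 2 * a2 + 2 * a3); c * (l0 + l1 - 2 * a1 + 2 * b2 - 2 * b3); c * (l0 - l1 + 2 * b1 - 2 * b2 - 2 * b3); c * (l0 - l1 - 2 * b1 - 2 * a2 + 2 * a3); c * (l0 - l1 - 2 * b1 + 2 * a2 - 2 * a3); c * (l0 - l1 + 2 * b1 + 2 * b2 + 2 * b3); c * (l0 + l1 - 2 * a1 - 2 * b2 + 2 * b3); c * (l0 + l1 + 2 * a1 - 2 * a2 - 2 * a3)];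
      [:: c * (l0 + l1 - 2 * a1 - 2 * b2 + 2 * b3); c * (l0 + l1 + 2 * a1 + 2 * a2 + 2 * a3); c * (l0 - l1 - 2 * b1 - 2 * a2 + 2 * a3); c * (l0 - l1 + 2 * b1 + 2 * b2 + 2 * b3); c * (l0 - l1 + 2 * b1 - 2 * b2 - 2 * b3); c * (l0 - l1 - 2 * b1 + 2 * a2 - 2 * a3); c * (l0 + l1 + 2 * a1 - 2 * a2 - 2 * a3); c * (l0 + l1 - 2 * a1 + 2 * b2 - 2 * b3)];
      [:: c * (l0 - l1 - 2 * b1 + 2 * b2 + 2 * b3); c * (l0 - l1 + 2 * b1 - 2 * a2 + 2 * a3); c * (l0 + l1 + 2 * a1 + 2 * a2 + 2 * a3); c * (l0 + l1 - 2 * a1 - 2 * b2 + 2 * b3); c * (l0 + l1 - 2 * a1 + 2 * b2 - 2 * b3); c * (l0 + l1 + 2 * a1 - 2 * a2 - 2 * a3); c * (l0 - l1 + 2 * b1 + 2 * a2 - 2 * a3); c * (l0 - l1 - 2 * b1 - 2 * b2 - 2 * b3)];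
      [:: c * (l0 - l1 + 2 * b1 - 2 * a2 + 2 * a3); c * (l0 - l1 - 2 * b1 - 2 * b2 - 2 * b3); c * (l0 + l1 - 2 * a1 + 2 * b2 - 2 * b3); c * (l0 + l1 + 2 * a1 + 2 * a2 + 2 * a3); c * (l0 + l1 + 2 * a1 - 2 * a2 - 2 * a3); c * (l0 + l1 - 2 * a1 - 2 * b2 + 2 * b3); c * (l0 - l1 - 2 * b1 + 2 * b2 + 2 * b3); c * (l0 - l1 + 2 * b1 + 2 * a2 - 2 * a3)];
      [:: c * (l0 - l1 + 2 * b1 + 2 * a2 - 2 * a3); c * (l0 - l1 - 2 * b1 + 2 * b2 + 2 * b3); c * (l0 + l1 - 2 * a1 - 2 * b2 + 2 * b3); c * (l0 + l1 + 2 * a1 - 2 * a2 - 2 * a3); c * (l0 + l1 + 2 * a1 + 2 * a2 + 2 * a3); c * (l0 + l1 - 2 * a1 + 2 * b2 - 2 * b3); c * (l0 - l1 - 2 * b1 - 2 * b2 - 2 * b3); c * (l0 - l1 + 2 * b1 - 2 * a2 + 2 * a3)];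
      [:: c * (l0 - l1 - 2 * b1 - 2 * b2 - 2 * b3); c * (l0 - l1 + 2 * b1 + 2 * a2 - 2 * a3); c * (l0 + l1 + 2 * a1 - 2 * a2 - 2 * a3); c * (l0 + l1 - 2 * a1 + 2 * b2 - 2 * b3); c * (l0 + l1 - 2 * a1 - 2 * b2 + 2 * b3); c * (l0 + l1 + 2 * a1 + 2 * a2 + 2 * a3); c * (l0 - l1 + 2 * b1 - 2 * a2 + 2 * a3); c * (l0 - l1 - 2 * b1 + 2 * b2 + 2 * b3)];
      [:: c * (l0 + l1 - 2 * a1 + 2 * b2 - 2 * b3); c * (l0 + l1 + 2 * a1 - 2 * a2 - 2 * a3); c * (l0 - l1 - 2 * b1 + 2 * a2 - 2 * a3); c * (l0 - l1 + 2 * b1 - 2 * b2 - 2 * b3); c * (l0 - l1 + 2 * b1 + 2 * b2 + 2 * b3); c * (l0 - l1 - 2 * b1 - 2 * a2 + 2 * a3); c * (l0 + l1 + 2 * a1 + 2 * a2 + 2 * a3); c * (l0 + l1 - 2 * a1 - 2 * b2 + 2 * b3)];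
      [:: c * (l0 + l1 + 2 * a1 - 2 * a2 - 2 * a3); c * (l0 + l1 - 2 * a1 - 2 * b2 + 2 * b3); c * (l0 - l1 + 2 * b1 + 2 * b2 + 2 * b3); c * (l0 - l1 - 2 * b1 + 2 * a2 - 2 * a3); c * (l0 - l1 - 2 * b1 - 2 * a2 + 2 * a3); c * (l0 - l1 + 2 * b1 - 2 * b2 - 2 * b3); c * (l0 + l1 - 2 * a1 + 2 * b2 - 2 * b3); c * (l0 + l1 + 2 * a1 + 2 * a2 + 2 * a3)]].
Definition Vtb (R : rcfType) : seq (seq R[i]) :=
  [:: [:: (1 +i* 0); (1 +i* 0); (1 +i* 0); (1 +i* 0); (1 +i* 0); (1 +i* 0); (1 +i* 0); (1 +i* 0)];
      [:: (1 +i* 0); (1 +i* 0); (-1 +i* 0); (-1 +i* 0); (-1 +i* 0); (-1 +i* 0); (1 +i* 0); (1 +i* 0)];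
      [:: (1 +i* -1); (-1 +i* 1); (-1 +i* -1); (1 +i* 1); (1 +i* 1); (-1 +i* -1); (-1 +i* 1); (1 +i* -1)];
      [:: (1 +i* -1); (-1 +i* -1); (1 +i* 1); (-1 +i* 1); (1 +i* -1); (-1 +i* -1); (1 +i* 1); (-1 +i* 1)];
      [:: (1 +i* -1); (1 +i* 1); (1 +i* 1); (1 +i* -1); (-1 +i* 1); (-1 +i* -1); (-1 +i* -1); (-1 +i* 1)];
      [:: (1 +i* 1); (-1 +i* -1); (-1 +i* 1); (1 +i* -1); (1 +i* -1); (-1 +i* 1); (-1 +i* -1); (1 +i* 1)];
      [:: (1 +i* 1); (-1 +i* 1); (1 +i* -1); (-1 +i* -1); (1 +i* 1); (-1 +i* 1); (1 +i* -1); (-1 +i* -1)];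
      [:: (1 +i* 1); (1 +i* -1); (1 +i* -1); (1 +i* 1); (-1 +i* -1); (-1 +i* 1); (-1 +i* 1); (-1 +i* -1)]].
Definition Vitb (R : rcfType) : seq (seq R[i]) :=
  [:: [:: (8^-1 +i* 0); (8^-1 +i* 0); (16^-1 +i* 16^-1); (16^-1 +i* 16^-1); (16^-1 +i* 16^-1); (16^-1 +i* - 16^-1); (16^-1 +i* - 16^-1); (16^-1 +i* - 16^-1)];
      [:: (8^-1 +i* 0); (8^-1 +i* 0); (- 16^-1 +i* - 16^-1); (- 16^-1 +i* 16^-1); (16^-1 +i* - 16^-1); (- 16^-1 +i* 16^-1); (- 16^-1 +i* - 16^-1); (16^-1 +i* 16^-1)];
      [:: (8^-1 +i* 0); (- 8^-1 +i* 0); (- 16^-1 +i* 16^-1); (16^-1 +i* - 16^-1); (16^-1 +i* - 16^-1); (- 16^-1 +i* - 16^-1); (16^-1 +i* 16^-1); (16^-1 +i* 16^-1)];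
      [:: (8^-1 +i* 0); (- 8^-1 +i* 0); (16^-1 +i* - 16^-1); (- 16^-1 +i* - 16^-1); (16^-1 +i* 16^-1); (16^-1 +i* 16^-1); (- 16^-1 +i* 16^-1); (16^-1 +i* - 16^-1)];
      [:: (8^-1 +i* 0); (- 8^-1 +i* 0); (16^-1 +i* - 16^-1); (16^-1 +i* 16^-1); (- 16^-1 +i* - 16^-1); (16^-1 +i* 16^-1); (16^-1 +i* - 16^-1); (- 16^-1 +i* 16^-1)];
      [:: (8^-1 +i* 0); (- 8^-1 +i* 0); (- 16^-1 +i* 16^-1); (- 16^-1 +i* 16^-1); (- 16^-1 +i* 16^-1); (- 16^-1 +i* - 16^-1); (- 16^-1 +i* - 16^-1); (- 16^-1 +i* - 16^-1)];
      [:: (8^-1 +i* 0); (8^-1 +i* 0); (- 16^-1 +i* - 16^-1); (16^-1 +i* - 16^-1); (- 16^-1 +i* 16^-1); (- 16^-1 +i* 16^-1); (16^-1 +i* 16^-1); (- 16^-1 +i* - 16^-1)];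
      [:: (8^-1 +i* 0); (8^-1 +i* 0); (16^-1 +i* 16^-1); (- 16^-1 +i* - 16^-1); (- 16^-1 +i* - 16^-1); (16^-1 +i* - 16^-1); (- 16^-1 +i* 16^-1); (- 16^-1 +i* 16^-1)]].
Definition Qm {R : rcfType} (c l0 l1 a1 b1 a2 b2 a3 b3 : R) : 'M[R]_8 :=
  \matrix_(i < 8, j < 8) nth 0 (nth [::] (Qtb c l0 l1 a1 b1 a2 b2 a3 b3) i) j.

Lemma eqR (R : rcfType) (x y : R) : x = y -> x = y. Proof. by []. Qed.

Ltac case8 i := let Hi := fresh "Hi" in
  case: i => [[|[|[|[|[|[|[|[|i]]]]]]]] Hi] //=.

Lemma Qm_normal (R : rcfType) (c l0 l1 a1 b1 a2 b2 a3 b3 : R) :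
  normal_real_mx (Qm c l0 l1 a1 b1 a2 b2 a3 b3).
Proof.
rewrite /normal_real_mx; apply/matrixP => i j; rewrite !mxE.
rewrite !big_ord_recl !big_ord0 !mxE.
case8 i; case8 j; apply: (@eqR R); ring.
Qed.

Lemma Qm_centro (R : rcfType) (c l0 l1 a1 b1 a2 b2 a3 b3 : R) :
  centrosymmetric (Qm c l0 l1 a1 b1 a2 b2 a3 b3).
Proof.
rewrite /centrosymmetric; apply/matrixP => i j.
rewrite !(big_ord_recl, big_ord0, mxE).
case8 i; case8 j; apply: (@eqR R); ring.
Qed.

Lemma Qm_nonneg (R : rcfType) (c l0 l1 a1 b1 a2 b2 a3 b3 n1 n2 n3 : R) :
  0 <= c -> l1 < 0 -> 0 <= l0 + l1 - 2 * (n1 + n2 + n3) ->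
  - n1 <= a1 <= n1 -> - n1 <= b1 <= n1 ->
  - n2 <= a2 <= n2 -> - n2 <= b2 <= n2 ->
  - n3 <= a3 <= n3 -> - n3 <= b3 <= n3 ->
  nonneg_mx (Qm c l0 l1 a1 b1 a2 b2 a3 b3).
Proof.
move=> c0 l1n H /andP[? ?] /andP[? ?] /andP[? ?] /andP[? ?] /andP[? ?] /andP[? ?] i j.
rewrite mxE; case8 i; case8 j; apply: mulr_ge0 => //; lra.
Qed.

Definition Vm (R : rcfType) : 'M[R[i]]_8 :=
  \matrix_(i < 8, j < 8) nth 0 (nth [::] (Vtb R) i) j.
Definition Vim (R : rcfType) : 'M[R[i]]_8 :=
  \matrix_(i < 8, j < 8) nth 0 (nth [::] (Vitb R) i) j.
Definition Dm {R : rcfType} (l0 l1 a1 b1 a2 b2 a3 b3 : R) : 'M[R[i]]_8 :=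
  \matrix_(i < 8, j < 8) if (i == j :> nat) then
    nth 0 [:: l0%:C; l1%:C; a1 +i* b1; a2 +i* b2; a3 +i* b3;
              (a1 +i* b1)^*; (a2 +i* b2)^*; (a3 +i* b3)^*] i else 0.

Lemma VVi (R : rcfType) : Vm R *m Vim R = 1%:M.
Proof.
apply/matrixP => i j; rewrite !(big_ord_recl, big_ord0, mxE).
case8 i; case8 j; rewrite ?mulr1n ?mulr0n; apply/eqP; rewrite eq_complex /=;
  apply/andP; split; apply/eqP; apply: (@eqR R); field; exact: isT.
Qed.

Lemma VQ (R : rcfType) (l0 l1 a1 b1 a2 b2 a3 b3 : R) :
  Vm R *m map_mx (fun x : R => (x%:C)%C) (Qm 8^-1 l0 l1 a1 b1 a2 b2 a3 b3) =
  Dm l0 l1 a1 b1 a2 b2 a3 b3 *m Vm R.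
Proof.
apply/matrixP => i j; rewrite !(big_ord_recl, big_ord0, mxE).
case8 i; case8 j; apply/eqP; rewrite eq_complex /=;
  apply/andP; split; apply/eqP; apply: (@eqR R); field; exact: isT.
Qed.
Lemma char_poly_sim (F : fieldType) n (P A B : 'M[F]_n) :
  P \in unitmx -> P *m A = B *m P -> char_poly A = char_poly B.
Proof.
move=> Pu PA.
have eA : A = invmx P *m B *m P by rewrite -mulmxA -PA mulmxA mulVmx // mul1mx.
pose f := @map_mx F {poly F} (@polyC F) n n.
have fI : f (invmx P) *m f P = 1%:M by rewrite -map_mxM mulVmx // map_mx1.
have cm : char_poly_mx A = f (invmx P) *m char_poly_mx B *m f P.
  by rewrite /char_poly_mx eA !map_mxM -/f mulmxBr mulmxBl scalar_mxC -(mulmxA (scalar_mx _)) fI mulmx1.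

by rewrite /char_poly cm !det_mulmx mulrAC -det_mulmx fI det1 mul1r.
Qed.

Lemma nb (R : rcfType) (a b : R) :
  - Num.sqrt (a^+2 + b^+2) <= a <= Num.sqrt (a^+2 + b^+2).
Proof.
rewrite -ler_norml -sqrtr_sqr; apply: ler_wsqrtr; rewrite lerDl sqr_ge0 //.
Qed.

Lemma Dm_trig (R : rcfType) (l0 l1 a1 b1 a2 b2 a3 b3 : R) :
  is_trig_mx (Dm l0 l1 a1 b1 a2 b2 a3 b3).
Proof.
by apply/is_trig_mxP => i j lt; rewrite mxE (ltn_eqF lt).
Qed.

Theorem theorem3p12 (R : rcfType) (lam0 lam1 a1 a2 a3 b1 b2 b3 : R) :
  0 <= lam0 -> lam1 < 0 ->
  0 < b1 -> 0 < b2 -> 0 < b3 ->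
  let z1 : R[i] := a1 +i* b1 in
  let z2 : R[i] := a2 +i* b2 in
  let z3 : R[i] := a3 +i* b3 in
  0 <= (lam0 + lam1)%:C - 2%:R * (`|z1| + `|z2| + `|z3|) ->
  exists Q : 'M[R]_8,
    [/\ normal_real_mx Q, centrosymmetric Q, nonneg_mx Q &
        has_spectrum Q [:: lam0%:C; lam1%:C; z1; z2; z3; z1^*; z2^*; z3^*]].
Proof.
move=> l0ge l1lt b1p b2p b3p z1 z2 z3 H.
rewrite /z1 /z2 /z3 !normc_def /= in H.
rewrite -(rmorph_nat (real_complex R) 2) -!rmorphD -rmorphM -rmorphB ler0c in H.
exists (Qm 8^-1 lam0 lam1 a1 b1 a2 b2 a3 b3); split.
- exact: Qm_normal.
- exact: Qm_centro.
- apply: (@Qm_nonneg R 8^-1 lam0 lam1 a1 b1 a2 b2 a3 b3 _ _ _ _ l1lt H) => //; rewrite ?invr_ge0 ?ler0n //; try exact: nb.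
  + by rewrite addrC; exact: nb.
  + by rewrite addrC; exact: nb.
  + by rewrite addrC; exact: nb.
- rewrite /has_spectrum.
  have Vu : Vm R \in unitmx by case: (mulmx1_unit (VVi R)).
  rewrite (@char_poly_sim _ _ _ _ _ Vu (VQ R lam0 lam1 a1 b1 a2 b2 a3 b3)) char_poly_trig; last exact: Dm_trig.
  rewrite !big_ord_recl big_ord0 !big_cons big_nil !mxE /=.
  by [].
Qed.
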